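(* Let $K$ be a field, $P=K[x_1,\dots,x_n]$, $g_1,\dots,g_r\in P$, $I=\langle g_1,\dots,g_r\rangle$, and let $Z=(z_1,\dots,z_s)$ be a tuple of distinct indeterminates among $x_1,\dots,x_n$. Then the following are equivalent: (a) the procedure $\mathrm{CHECK}$ applied to $(g_1,\dots,g_r)$ and $Z$ returns a weight tuple $W\in\mathbb{N}^n$ (rather than ``Fail''); (b) there exists a $Z$-separating tuple $(f_1,\dots,f_s)$ of polynomials in $I$ with $f_1,\dots,f_s\in\langle g_1,\dots,g_r\rangle_K$.
   Context: $\operatorname{Supp}(f)$ is the set of terms occurring in $f$; $\operatorname{Lin}(f)$ is the homogeneous degree-1 component of $f$; $\langle\cdot\rangle_K$ denotes $K$-linear span. A tuple $(f_1,\dots,f_s)$ of polynomials in an ideal $I$ is $Z$-separating if there is a term ordering $\sigma$ with $\operatorname{LT}_\sigma(f_i)=z_i$ for all $i$. Procedure $\mathrm{LI}$ (linear interreduction), applied to a tuple $Z=(z_1,\dots,z_s)$ of distinct indeterminates and polynomials $g_1,\dots,g_r$: let $t_1>\dots>t_m$ (lexicographic order, $x_1>\dots>x_n$) be the terms of $\bigcup_j\operatorname{Supp}(g_j)$ other than $z_1,\dots,z_s$; form the coefficient matrix $M$ of $g_1,\dots,g_r$ w.r.t. column order $(z_1,\dots,z_s,t_1,\dots,t_m)$; output the polynomials whose coefficient vectors are the nonzero rows of the reduced row echelon form of $M$, in order. Procedure $\mathrm{CHECK}$ on input $(g_1,\dots,g_r)$ and $Z$: (1) set $w_1=\dots=w_n=0$,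 $\delta=\max_j\deg(g_j)$, $d=1$. (2) In each $g_j$ delete every monomial not divisible by some indeterminate of $Z$. (3) If $\dim_K\langle\operatorname{Lin}(g_1),\dots,\operatorname{Lin}(g_r)\rangle_K<\#Z$, return ``Fail''. (4) Repeat: (i) replace the current list $g_1,\dots,g_r$ by the output of $\mathrm{LI}$ applied to the current $Z$ and the current list; (ii) let $\widetilde Z$ be the set of indeterminates of the current $Z$ that occur as elements of the current list; (iii) if $\widetilde Z=\emptyset$, return ``Fail''; (iv) for each $z\in\widetilde Z$, say $z=x_k$, set $w_k=d$ and remove $z$ from $Z$; (v) in each current $g_j$ delete every monomial not divisible by some indeterminate of the (updated) $Z$; (vi) replace $d$ by $\delta d+1$; until $Z$ is empty. (5) Return $W=(w_1,\dots,w_n)$. *)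

(* Defs.v *)
From HB Require Import structures.
From mathcomp Require Import all_boot all_order all_algebra.
From mathcomp Require Import mpoly.

Set Implicit Arguments.
Unset Strict Implicit.
Unset Printing Implicit Defensive.

Import GRing.Theory.
Local Open Scope ring_scope.

Section Procedures.
Variable K : fieldType.
Variable n : nat.

Local Notation poly := {mpoly K[n]}.
Local Notation term := 'X_{1..n}.

(* The term (power product) of the indeterminate x_(k+1), k : 'I_n. *)
Definition var_term (k : 'I_n) : term := U_(k)%MM.

Definition term_ordering (le : rel term) : Prop :=
  [/\ reflexive le, antisymmetric le, transitive le & total le] /\
  (forall t, le 0%MM t) /\
  (forall t1 t2 t3, le t1 t2 -> le (t1 + t3)%MM (t2 + t3)%MM).

Definition is_LT (le : rel term) (f : poly) (t : term) : Prop :=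
  t \in msupp f /\ (forall t', t' \in msupp f -> le t' t).

Definition Z_separating (s : nat) (Z : 'I_s -> 'I_n) (f : 'I_s -> poly) : Prop :=
  exists le : rel term, term_ordering le /\
    forall i : 'I_s, is_LT le (f i) (var_term (Z i)).

Definition in_ideal (r : nat) (g : 'I_r -> poly) (f : poly) : Prop :=
  exists h : 'I_r -> poly, f = \sum_(j < r) h j * g j.

Definition in_Kspan (r : nat) (g : 'I_r -> poly) (f : poly) : Prop :=
  exists c : 'I_r -> K, f = \sum_(j < r) c j *: g j.

(* lexicographic comparison of exponent vectors: x_1 > x_2 > ... > x_n *)
Fixpoint lex_le (a b : seq nat) : bool :=
  match a, b with
  | x :: a', y :: b' => (x < y)%N || ((x == y) && lex_le a' b')
  | _, _ => true
  end.

Definition term_lex_le (t1 t2 : term) : bool := lex_le (tval t1) (tval t2).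

(* Gauss-Jordan elimination on the coefficient matrix whose columns are
   indexed (in this order) by the terms [cols]; rows are polynomials.
   [done] are the already computed pivot rows (in pivot order), [rest]
   the rows not yet used as pivots.  Returns the nonzero rows of the
   reduced row echelon form, in order. *)
Fixpoint gauss_jordan (cols : seq term) (done rest : seq poly) : seq poly :=
  match cols with
  | [::] => done
  | c :: cs =>
    let i := find (fun p : poly => p@_c != 0) rest in
    if (i < size rest)%N then
      let p := nth 0 rest i in
      let q := (p@_c)^-1 *: p in
      let elim (u : poly) := u - u@_c *: q in
      gauss_jordan cs (rcons (map elim done) q)
                      [seq u <- map elim rest | u != 0]
    else gauss_jordan cs done rest
  end.

Definition LI (Z : seq 'I_n) (g : seq poly) : seq poly :=
  let zt := map var_term Z in
  let others := undup [seq t <- flatten (map (@msupp n K) g) | t \notin zt] in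
  (* t_1 > ... > t_m in lex order *)
  let ts := sort (fun t1 t2 => term_lex_le t2 t1) others in
  gauss_jordan (zt ++ ts) [::] g.

Definition keep_Z (Z : seq 'I_n) (p : poly) : poly :=
  \sum_(t <- msupp p | has (fun z => (0 < t z)%N) Z) p@_t *: 'X_[t].

Definition total_degree (p : poly) : nat := \max_(t <- msupp p) mdeg t.

(* dim_K <Lin(g_1),...,Lin(g_r)>_K, computed as the rank of the r x n
   matrix of coefficients of x_1,...,x_n in g_1,...,g_r. *)
Definition dim_Lin (g : seq poly) : nat :=
  \rank (\matrix_(j < size g, k < n) (g`_j)@_(var_term k)).

(* The repeat-until loop of step (4); [fuel] bounds the number of
   iterations (each successful iteration removes >= 1 element of Z). *)
Fixpoint check_loop (delta : nat) (fuel : nat) (Z : seq 'I_n) (g : seq poly)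
    (w : {ffun 'I_n -> nat}) (d : nat) : option {ffun 'I_n -> nat} :=
  match fuel with
  | 0 => None
  | fuel'.+1 =>
    let g1 := LI Z g in
    let Zt := [seq z <- Z | 'X_[var_term z] \in g1] in
    if Zt == [::] then None
    else
      let w' := [ffun k => if k \in Zt then d else w k] in
      let Z' := [seq z <- Z | z \notin Zt] in
      let g2 := map (keep_Z Z') g1 in
      let d' := (delta * d + 1)%N in
      if Z' == [::] then Some w'
      else check_loop delta fuel' Z' g2 w' d'
  end.

(* CHECK: returns Some W, or None for "Fail". *)
Definition CHECK (g : seq poly) (Z : seq 'I_n) : option {ffun 'I_n -> nat} :=
  let w0 := [ffun _ => 0%N] in
  let delta := \max_(p <- g) total_degree p in
  let d := 1%N in
  let g0 := map (keep_Z Z) g in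
  if (dim_Lin g0 < size Z)%N then None
  else check_loop delta (size Z) Z g0 w0 d.

End Procedures.

(* Main.v *)
Require Import Defs.
From HB Require Import structures.
From mathcomp Require Import all_boot all_order all_algebra.
From mathcomp Require Import mpoly.
From mathcomp Require Import zify.

Set Implicit Arguments.
Unset Strict Implicit.
Unset Printing Implicit Defensive.
Import GRing.Theory.
Local Open Scope ring_scope.

Section Span.
Variable K : fieldType.
Variable n : nat.
Local Notation poly := {mpoly K[n]}.

Fixpoint inspan (l : seq poly) (f : poly) : Prop :=
  match l with
  | [::] => f = 0
  | p :: l' => exists a : K, inspan l' (f - a *: p)
  end.

Definition subspace (S : poly -> Prop) :=
  [/\ S 0, forall x y, S x -> S y -> S (x + y) & forall a x, S x -> S (a *: x)].

Lemma inspan_subspace l : subspace (inspan l).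
Proof.
elim: l => [|p l [H0 HD HZ]] /=; split.
- by [].
- by move=> x y -> ->; rewrite addr0.
- by move=> a x ->; rewrite scaler0.
- by exists 0; rewrite scale0r subr0.
- move=> x y [a Ha] [b Hb]; exists (a + b).
  have -> : x + y - (a + b) *: p = (x - a *: p) + (y - b *: p).
    by rewrite scalerDl opprD addrACA.
  exact: HD.
- move=> c x [a Ha]; exists (c * a).
  have -> : c *: x - (c * a) *: p = c *: (x - a *: p) by rewrite scalerBr scalerA.
  exact: HZ.
Qed.

Lemma inspan0 l : inspan l 0. Proof. by case: (inspan_subspace l). Qed.
Lemma inspanD l x y : inspan l x -> inspan l y -> inspan l (x + y).
Proof. by case: (inspan_subspace l) => _ H _; apply: H. Qed.
Lemma inspanZ l a x : inspan l x -> inspan l (a *: x).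
Proof. by case: (inspan_subspace l) => _ _ H; apply: H. Qed.
Lemma inspanN l x : inspan l x -> inspan l (- x).
Proof. by move=> H; rewrite -scaleN1r; apply: inspanZ. Qed.
Lemma inspanB l x y : inspan l x -> inspan l y -> inspan l (x - y).
Proof. by move=> Hx Hy; apply: inspanD => //; apply: inspanN. Qed.
Lemma inspan_sum l (I : Type) (r : seq I) (F : I -> poly) :
  (forall i, inspan l (F i)) -> inspan l (\sum_(i <- r) F i).
Proof.
move=> H; elim: r => [|i r IH]; first by rewrite big_nil; apply: inspan0.
by rewrite big_cons; apply: inspanD.
Qed.

Lemma inspan_mem l x : x \in l -> inspan l x.
Proof.
elim: l => [//|p l IH] /=; rewrite inE => /orP [/eqP ->|Hx].
  by exists 1; rewrite scale1r subrr; apply: inspan0.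
by exists 0; rewrite scale0r subr0; apply: IH.
Qed.

Lemma span_sub (S : poly -> Prop) l :
  subspace S -> (forall x, x \in l -> S x) -> forall f, inspan l f -> S f.
Proof.
move=> [H0 HD HZ]; elim: l => [|p l IH] Hl f /=; first by move->.
move=> [a Ha]; have -> : f = (f - a *: p) + a *: p by rewrite subrK.
apply: HD; last by apply: HZ; apply: Hl; rewrite inE eqxx.
by apply: IH => // x Hx; apply: Hl; rewrite inE Hx orbT.
Qed.

Lemma span_trans l1 l2 : (forall x, x \in l1 -> inspan l2 x) ->
  forall f, inspan l1 f -> inspan l2 f.
Proof. by apply: span_sub; apply: inspan_subspace. Qed.

Lemma mcoeff_keep_Z (Z : seq 'I_n) (p : poly) m :
  (keep_Z Z p)@_m = if has (fun z => (0 < m z)%N) Z then p@_m else 0.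
Proof.
rewrite /keep_Z raddf_sum /= big_mkcond /=.
under eq_bigr => t _ do rewrite mcoeffZ mcoeffX.
case: (boolP (m \in msupp p)) => Hm.
  rewrite (bigD1_seq m) //= ?msupp_uniq // eqxx mulr1.
  rewrite big1 ?addr0; last by move=> t /negbTE Ht; rewrite Ht mulr0 if_same.
  by case: ifP.
rewrite big1_seq; last first.
  move=> t /andP [_ Ht]; case: ifP => // _; case: eqP => [E|_]; last by rewrite mulr0.
  by rewrite -E Ht in Hm.
by rewrite (memN_msupp_eq0 Hm) if_same.
Qed.

Lemma keep_ZE (Z : seq 'I_n) (a : K) (x y : poly) :
  keep_Z Z (a *: x + y) = a *: keep_Z Z x + keep_Z Z y.
Proof.
apply/mpolyP => m; rewrite mcoeffD mcoeffZ !mcoeff_keep_Z mcoeffD mcoeffZ.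
by case: ifP => _; rewrite ?mulr0 ?addr0.
Qed.

Lemma keep_Z_sub (Z Z' : seq 'I_n) (p : poly) : {subset Z' <= Z} ->
  keep_Z Z' (keep_Z Z p) = keep_Z Z' p.
Proof.
move=> HZ; apply/mpolyP => m; rewrite !mcoeff_keep_Z.
case: (boolP (has _ Z')) => // /hasP [z Hz Hmz].
by case: hasP => // [[]]; exists z => //; apply: HZ.
Qed.

Lemma keep_Z_id (Z : seq 'I_n) (p : poly) : keep_Z Z (keep_Z Z p) = keep_Z Z p.
Proof. exact: keep_Z_sub. Qed.

Definition Inv1 (ps : seq 'X_{1..n}) (done : seq poly) :=
  size ps = size done /\ forall i j, (i < size done)%N -> (j < size done)%N ->
    (nth 0 done i)@_(nth 0%MM ps j) = (i == j)%:R.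
Definition Inv2 (ps : seq 'X_{1..n}) (rest : seq poly) :=
  forall u, u \in rest -> forall t, t \in ps -> u@_t = 0.
Definition Inv4 (cols : seq 'X_{1..n}) (rest : seq poly) :=
  forall u, u \in rest -> forall t, u@_t != 0 -> t \in cols.

Lemma GJ cols : forall done rest ps, Inv1 ps done -> Inv2 ps rest -> Inv4 cols rest ->
  exists ps', Inv1 ps' (gauss_jordan cols done rest) /\
   (forall x, x \in gauss_jordan cols done rest -> inspan (done ++ rest) x) /\
   (forall x, x \in done ++ rest -> inspan (gauss_jordan cols done rest) x).
Proof.
elim: cols => [|c cs IH] done rest ps H1 H2 H4 /=.
  exists ps; split => //; split => x Hx; first by apply: inspan_mem; rewrite mem_cat Hx.
  move: Hx; rewrite mem_cat => /orP [Hx|Hx]; first exact: inspan_mem.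
  have -> : x = 0 by apply/mpolyP => m; rewrite mcoeff0; apply/eqP; apply: contraT => /(H4 x Hx).
  exact: inspan0.
set i := find _ rest.
case: ifP => Hi; last first.
  have Hall : forall u, u \in rest -> u@_c = 0.
    move=> u Hu; apply/eqP; apply: contraT => Hc.
    have : has (fun p : poly => p@_c != 0) rest by apply/hasP; exists u.
    by rewrite has_find Hi.
  apply: (IH done rest ps) => // u Hu t Ht; have := H4 u Hu t Ht; rewrite inE => /orP [/eqP E|//].
  by move: Ht; rewrite E Hall // eqxx.
set p : poly := nth 0 rest i.
have Hp : p@_c != 0 by apply: (@nth_find _ 0 (fun p : poly => p@_c != 0)); rewrite has_find Hi.
have Hpr : p \in rest by apply: mem_nth.
set q : poly := (p@_c)^-1 *: p.
set elim : poly -> poly := fun u : poly => u - u@_c *: q.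
have qc : q@_c = 1 by rewrite mcoeffZ mulVf.
have qps : forall t, t \in ps -> q@_t = 0 by move=> t Ht; rewrite mcoeffZ (H2 p Hpr t Ht) mulr0.
have elimE : forall u t, (elim u)@_t = u@_t - u@_c * q@_t.
  by move=> u t; rewrite /elim mcoeffB mcoeffZ.
have elimc : forall u, (elim u)@_c = 0 by move=> u; rewrite elimE qc mulr1 subrr.
have elimps : forall u t, t \in ps -> (elim u)@_t = u@_t.
  by move=> u t Ht; rewrite elimE qps // mulr0 subr0.
set done' : seq poly := rcons (map elim done) q.
set rest' : seq poly := [seq u <- map elim rest | u != 0].
case: H1 => Hsz H1.
have H1' : Inv1 (rcons ps c) done'.
  split; first by rewrite /done' !size_rcons size_map Hsz.
  rewrite /done' size_rcons size_map => a b.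
  rewrite ltnS leq_eqVlt => /orP [/eqP Ea| Ha]; rewrite ltnS leq_eqVlt => /orP [/eqP Eb| Hb].
  - by rewrite Ea Eb !nth_rcons size_map Hsz ltnn !eqxx qc.
  - rewrite Ea !nth_rcons size_map Hsz ltnn eqxx Hb qps ?(gtn_eqF Hb) //.
    by apply: mem_nth; rewrite Hsz.
  - by rewrite Eb !nth_rcons size_map Hsz ltnn eqxx Ha (nth_map 0) // elimc (ltn_eqF Ha).
  - rewrite !nth_rcons size_map Hsz Ha Hb (nth_map 0) // elimps ?H1 //.
    by apply: mem_nth; rewrite Hsz.
have H2' : Inv2 (rcons ps c) rest'.
  move=> u; rewrite mem_filter => /andP [_ /mapP [v Hv ->]] t.
  rewrite mem_rcons inE => /orP [/eqP ->|Ht]; first exact: elimc.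
  by rewrite elimps // H2.
have H4' : Inv4 cs rest'.
  move=> u; rewrite mem_filter => /andP [_ /mapP [v Hv ->]] t Ht.
  have Htc : t != c by apply: contraNneq Ht => ->; rewrite elimc.
  have : t \in c :: cs.
    move: Ht; rewrite elimE; case: (boolP (v@_t == 0)) => [/eqP Hvt|Hvt _].
      case: (boolP (q@_t == 0)) => [/eqP ->|Hqt _]; first by rewrite Hvt mulr0 subrr eqxx.
      by apply: (H4 p Hpr); move: Hqt; rewrite mcoeffZ mulf_eq0 negb_or => /andP [].
    exact: H4 v Hv t Hvt.
  by rewrite inE (negbTE Htc).
have [ps' [G1 [G2 G3]]] := IH done' rest' (rcons ps c) H1' H2' H4'.
exists ps'; split => //.
have HA : forall x, x \in done ++ rest -> inspan (done ++ rest) x by move=> x; apply: inspan_mem.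
have Hq : inspan (done ++ rest) q by apply: inspanZ; apply: HA; rewrite mem_cat Hpr orbT.
have Helim : forall u, u \in done ++ rest -> inspan (done ++ rest) (elim u).
  by move=> u Hu; apply: inspanB; [apply: HA | apply: inspanZ].
have Hq' : inspan (done' ++ rest') q by apply: inspan_mem; rewrite mem_cat mem_rcons inE eqxx.
have Helim' : forall u, u \in done ++ rest -> inspan (done' ++ rest') (elim u).
  move=> u; rewrite mem_cat => /orP [Hu|Hu].
    by apply: inspan_mem; rewrite mem_cat mem_rcons inE map_f ?orbT.
  case: (boolP (elim u == 0)) => [/eqP ->|Hn]; first exact: inspan0.
  by apply: inspan_mem; rewrite mem_cat mem_filter Hn map_f ?orbT.
split.
  move=> x Hx; apply: (span_trans _ (G2 x Hx)) => y.
  rewrite mem_cat mem_rcons inE -orbA => /orP [/eqP ->//|/orP [/mapP [v Hv ->]|]].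
    by apply: Helim; rewrite mem_cat Hv.
  by rewrite mem_filter => /andP [_ /mapP [v Hv ->]]; apply: Helim; rewrite mem_cat Hv orbT.
move=> x Hx; apply: (span_trans G3).
have -> : x = elim x + x@_c *: q by rewrite subrK.
by apply: inspanD; [apply: Helim' | apply: inspanZ].
Qed.

Lemma pivot_mem ps (out : seq poly) t : Inv1 ps out -> inspan out 'X_[t] -> 'X_[t] \in out.
Proof.
move=> [Hsz H1] Hx.
pose S (h : poly) := h = \sum_(j < size out) h@_(nth 0%MM ps j) *: nth 0 out j.
have HS : subspace S.
  split; rewrite /S.
  - by rewrite big1 // => j _; rewrite mcoeff0 scale0r.
  - move=> x y Hx' Hy'; rewrite {1}Hx' {1}Hy' -big_split /=.
    by apply: eq_bigr => j _; rewrite mcoeffD scalerDl.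
  - move=> a x Hx'; rewrite {1}Hx' scaler_sumr; apply: eq_bigr => j _.
    by rewrite mcoeffZ scalerA.
have Hmem : forall x, x \in out -> S x.
  move=> x /(nthP 0) [i Hi <-]; rewrite /S (bigD1 (Ordinal Hi)) //= H1 // eqxx scale1r.
  rewrite big1 ?addr0 // => j /negbTE Hj; rewrite H1 //.
  by rewrite eq_sym; move: Hj; rewrite -val_eqE /= => ->; rewrite scale0r.
have HX := span_sub HS Hmem Hx; rewrite /S in HX.
case: (boolP [exists j : 'I_(size out), t == nth 0%MM ps j]) => [/existsP [j /eqP Hj]|Hn].
  rewrite HX (bigD1 j) //= big1 ?addr0.
    by rewrite mcoeffX Hj eqxx scale1r mem_nth.
  move=> k Hk; rewrite mcoeffX Hj; case: eqP => [E|_]; last by rewrite scale0r.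
  have := H1 j k (ltn_ord j) (ltn_ord k).
  move: Hk; rewrite -E H1 // eqxx -val_eqE /= eq_sym => /negbTE -> /eqP.
  by rewrite oner_eq0.
exfalso; move: HX; rewrite big1 => [|j _].
  move/(congr1 (mcoeff t)); rewrite mcoeffX eqxx mcoeff0 => /eqP; by rewrite oner_eq0.
rewrite mcoeffX; case: eqP => [E|_]; last by rewrite scale0r.
by move: Hn; rewrite negb_exists => /forallP /(_ j); rewrite E eqxx.
Qed.

Lemma LI_spec (Z : seq 'I_n) (g : seq poly) :
  [/\ forall x, x \in LI Z g -> inspan g x,
      forall x, x \in g -> inspan (LI Z g) x &
      forall t, inspan g 'X_[t] -> 'X_[t] \in LI Z g].
Proof.
have H1 : Inv1 [::] ([::] : seq poly) by split => // i j.
have H2 : Inv2 [::] g by [].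
have H4 : Inv4 ((map (@var_term n) Z) ++ sort (fun t1 t2 => term_lex_le t2 t1)
           (undup [seq t <- flatten (map (@msupp n K) g) | t \notin map (@var_term n) Z])) g.
  move=> u Hu t Ht; rewrite mem_cat; case: (boolP (t \in map _ Z)) => //= HtZ.
  rewrite mem_sort mem_undup mem_filter HtZ /=.
  by apply/flatten_mapP; exists u => //; rewrite mcoeff_msupp.
have [ps [G1 [G2 G3]]] := GJ H1 H2 H4.
rewrite /LI; split => //.
move=> t Ht; apply: (pivot_mem G1); apply: (span_trans G3 Ht).
Qed.
End Span.

Section PartA.
Import Order.TTheory.
Variable K : fieldType.
Variable n : nat.
Local Notation poly := {mpoly K[n]}.

Definition wt (W : {ffun 'I_n -> nat}) (t : 'X_{1..n}) := (\sum_(k < n) W k * t k)%N.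

Lemma wtD W t1 t2 : wt W (t1 + t2)%MM = (wt W t1 + wt W t2)%N.
Proof. by rewrite /wt -big_split /=; apply: eq_bigr => k _; rewrite mnmDE mulnDr. Qed.

Lemma wt0 W : wt W 0%MM = 0%N.
Proof. by rewrite /wt big1 // => k _; rewrite mnm0E muln0. Qed.

Lemma wt_var W z : wt W (var_term z) = W z.
Proof.
rewrite /wt (bigD1 z) //= big1 ?addn0; first by rewrite /var_term mnm1E eqxx muln1.
by move=> k Hk; rewrite /var_term mnm1E eq_sym (negbTE Hk) muln0.
Qed.

Definition leW (W : {ffun 'I_n -> nat}) (t1 t2 : 'X_{1..n}) :=
  (wt W t1 < wt W t2)%N || ((wt W t1 == wt W t2) && (t1 <= t2)%O).

Lemma leW_ord W : term_ordering (leW W).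
Proof.
split; [split|split].
- by move=> t; rewrite /leW eqxx lexx orbT.
- move=> t1 t2 /andP []; rewrite /leW.
  case: (ltngtP (wt W t1) (wt W t2)) => //= _ H1 H2.
  by apply/eqP; rewrite eq_le H1 H2.
- move=> t2 t1 t3; rewrite /leW.
  case: (ltngtP (wt W t1) (wt W t2)) => //= H12;
  case: (ltngtP (wt W t2) (wt W t3)) => //= H23.
  + by rewrite (ltn_trans H12 H23).
  + by rewrite -H23 H12.
  + by rewrite H12 H23.
  + by rewrite H12 H23 eqxx ltnn /=; apply: le_trans.
- move=> t1 t2; rewrite /leW; case: (ltngtP (wt W t1) (wt W t2)) => //= _.
  exact: le_total.
- move=> t; rewrite /leW wt0; case: (posnP (wt W t)) => [->|H].
    by rewrite eqxx le0m orbT.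
  by [].
- move=> t1 t2 t3; rewrite /leW !wtD ltn_add2r eqn_add2r lemc_add2l.
  done.
Qed.

Lemma wt_bound (w : {ffun 'I_n -> nat}) (delta d : nat) (t : 'X_{1..n}) :
  (0 < d)%N -> (forall k, delta * w k < d)%N -> (mdeg t <= delta)%N ->
  (\sum_(k < n) w k * t k < d)%N.
Proof.
move=> d0 Hw Ht.
case: (posnP delta) => [D0|Dp].
  rewrite D0 leqn0 mdeg_eq0 in Ht; rewrite (eqP Ht) big1 // => k _.
  by rewrite mnm0E muln0.
have : (delta * \sum_(k < n) w k * t k <= delta * d.-1)%N.
  rewrite big_distrr /=.
  apply: (@leq_trans (\sum_(k < n) t k * d.-1)%N).
    apply: leq_sum => k _; rewrite [(w k * t k)%N]mulnC mulnCA leq_mul2l.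
    by rewrite -ltnS prednK // (Hw k) orbT.
  by rewrite -big_distrl /= -mdegE leq_mul2r Ht orbT.
rewrite leq_mul2l (gtn_eqF Dp) /= => H.
by apply: leq_ltn_trans H _; rewrite prednK.
Qed.

Lemma span_deg (G : seq poly) f t : inspan G f -> f@_t != 0 ->
  (mdeg t <= \max_(p <- G) total_degree p)%N.
Proof.
move=> Hf; move: t; apply: (span_sub (S := fun f : poly => forall t, f@_t != 0 -> _)) Hf.
  split.
  - by move=> t; rewrite mcoeff0 eqxx.
  - move=> x y Hx Hy t; rewrite mcoeffD; case: (boolP (x@_t == 0)) => [/eqP ->|/Hx //].
    by rewrite add0r => /Hy.
  - by move=> a x Hx t; rewrite mcoeffZ mulf_eq0 negb_or => /andP [_ /Hx].
move=> x Hx t Ht.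
have H1 := @leq_bigmax_seq _ G xpredT (@total_degree K n) x Hx isT.
apply: leq_trans H1; rewrite /total_degree.
by apply: (@leq_bigmax_seq _ (msupp x) xpredT (@mdeg n) t _ isT); rewrite mcoeff_msupp.
Qed.

Lemma keep_Z0 (Z : seq 'I_n) : keep_Z Z (0 : poly) = 0.
Proof. by apply/mpolyP => m; rewrite mcoeff_keep_Z mcoeff0 if_same. Qed.
Lemma keep_ZD (Z : seq 'I_n) (x y : poly) : keep_Z Z (x + y) = keep_Z Z x + keep_Z Z y.
Proof. by have := keep_ZE Z 1 x y; rewrite !scale1r. Qed.
Lemma keep_ZZ (Z : seq 'I_n) a (x : poly) : keep_Z Z (a *: x) = a *: keep_Z Z x.
Proof. by have := keep_ZE Z a x 0; rewrite keep_Z0 !addr0. Qed.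

Lemma loopA (G : seq poly) delta
  (Hd : forall f t, inspan G f -> f@_t != 0 -> (mdeg t <= delta)%N) :
  forall fuel (Z : seq 'I_n) gc w d W, check_loop delta fuel Z gc w d = Some W ->
  (forall h, inspan gc h -> exists f, inspan G f /\ h = keep_Z Z f) ->
  (0 < d)%N -> (forall k, delta * w k < d)%N ->
  (forall k, k \notin Z -> W k = w k) /\
  (forall z, z \in Z -> exists f, inspan G f /\ f@_(var_term z) != 0 /\
     forall t, f@_t != 0 -> t != var_term z -> (wt W t < wt W (var_term z))%N).
Proof.
elim=> [//|fuel IH] Z gc w d W /=.
set g1 := LI Z gc.
set Zt := [seq z <- Z | _].
case: eqP => // HZt.
set w' := [ffun k => _]; set Z' := [seq z <- Z | _]; set g2 := map _ g1.
move=> HW Hgc d0 Hw.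
have HZ'Z : {subset Z' <= Z} by move=> z; rewrite mem_filter => /andP [].
have HZtZ : {subset Zt <= Z} by move=> z; rewrite mem_filter => /andP [].
have Hw'1 : forall k, k \notin Z -> w' k = w k.
  move=> k Hk; rewrite /w' ffunE; case: ifP => // /HZtZ Hk'; by rewrite Hk' in Hk.
have Hg2 : forall h, inspan g2 h -> exists f, inspan G f /\ h = keep_Z Z' f.
  apply: span_sub.
    split.
    - by exists 0; split; [apply: inspan0 | rewrite keep_Z0].
    - move=> x y [f1 [Hf1 ->]] [f2 [Hf2 ->]]; exists (f1 + f2); split.
        exact: inspanD.
      by rewrite keep_ZD.
    - move=> a x [f1 [Hf1 ->]]; exists (a *: f1); split; first exact: inspanZ.
      by rewrite keep_ZZ.
  move=> x /mapP [y Hy ->]; have [Hg1 _ _] := LI_spec Z gc.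
  have [f [Hf ->]] := Hgc y (Hg1 y Hy); exists f; split => //.
  by rewrite keep_Z_sub.
have Hw' : forall k, (delta * w' k < (delta * d + 1))%N.
  move=> k; rewrite /w' ffunE; case: ifP => _; first by rewrite addn1.
  have := Hw k; case: (posnP delta) => [->|Dp]; first by rewrite !mul0n.
  move=> H; nia.
have [HWk HWz] : (forall k, k \notin Z' -> W k = w' k) /\
  (forall z, z \in Z' -> exists f, inspan G f /\ f@_(var_term z) != 0 /\
     forall t, f@_t != 0 -> t != var_term z -> (wt W t < wt W (var_term z))%N).
  move: HW; case: eqP => [HZ' [<-]|HZ' HW].
    by split => // z; rewrite HZ'.
  by apply: (IH Z' g2 w' (delta * d + 1)%N W HW Hg2) => //; rewrite addn1.
have HWZ : forall k, k \notin Z -> W k = w k.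
  move=> k Hk; rewrite HWk ?Hw'1 //; apply: contra Hk; exact: HZ'Z.
split => // z Hz.
case: (boolP (z \in Zt)) => HzZt; last first.
  by apply: HWz; rewrite mem_filter HzZt.
have HX : 'X_[var_term z] \in g1 by move: HzZt; rewrite mem_filter => /andP [].
have [Hg1 _ _] := LI_spec Z gc.
have [f [Hf HfX]] := Hgc _ (Hg1 _ HX).
have Hfc : forall t, (keep_Z Z f)@_t = (var_term z == t)%:R by move=> t; rewrite -HfX mcoeffX.
have HWz' : W z = d.
  rewrite HWk; first by rewrite /w' ffunE HzZt.
  by rewrite mem_filter HzZt.
exists f; split => //; split.
  have := Hfc (var_term z); rewrite mcoeff_keep_Z eqxx.
  have -> : has (fun z0 => (0 < var_term z z0)%N) Z.
    by apply/hasP; exists z => //; rewrite /var_term mnm1E eqxx.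
  by move=> ->; rewrite oner_eq0.
move=> t Ht Htz; rewrite wt_var HWz' /wt.
have Hnot : forall k, (0 < t k)%N -> k \notin Z.
  move=> k Hk; apply/negP => HkZ.
  have := Hfc t; rewrite mcoeff_keep_Z eq_sym (negbTE Htz).
  have -> : has (fun z0 => (0 < t z0)%N) Z by apply/hasP; exists k.
  by move/eqP; rewrite (negbTE Ht).
rewrite (eq_bigr (fun k => w k * t k)%N); last first.
  move=> k _; case: (posnP (t k)) => [->|Hk]; first by rewrite !muln0.
  by rewrite HWZ // Hnot.
apply: wt_bound => //; exact: Hd Hf Ht.
Qed.
End PartA.

Section PartB.
Variable K : fieldType.
Variable n : nat.
Local Notation poly := {mpoly K[n]}.
Variable le : rel 'X_{1..n}.
Hypothesis Hle : term_ordering le.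

Lemma le_refl' t : le t t. Proof. by case: Hle => [[]]. Qed.
Lemma le_anti' t1 t2 : le t1 t2 -> le t2 t1 -> t1 = t2.
Proof. by case: Hle => [[_ H _ _]] _ ?? ; apply: H; apply/andP. Qed.
Lemma le_trans' t2 t1 t3 : le t1 t2 -> le t2 t3 -> le t1 t3.
Proof. by case: Hle => [[_ _ H _]] _; apply: H. Qed.
Lemma le_total' t1 t2 : le t1 t2 || le t2 t1.
Proof. by case: Hle => [[_ _ _ H]] _; apply: H. Qed.

Lemma le_div (t : 'X_{1..n}) z : (0 < t z)%N -> le (var_term z) t.
Proof.
move=> Hz; case: Hle => _ [H0 HC].
have := HC 0%MM (t - var_term z)%MM (var_term z) (H0 _).
rewrite add0m submK //; apply/mnm_lepP => k; rewrite /var_term mnm1E.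
by case: eqP => [<-|] //.
Qed.

Lemma min_exists (Y : seq 'I_n) : Y != [::] ->
  exists2 zm, zm \in Y & forall z, z \in Y -> le (var_term zm) (var_term z).
Proof.
elim: Y => [//|y Y IH] _; case: (eqVneq Y [::]) => [->|HY].
  by exists y; rewrite ?inE ?eqxx // => z; rewrite inE => /eqP ->; apply: le_refl'.
have [zm Hzm Hmin] := IH HY.
case/orP: (le_total' (var_term y) (var_term zm)) => Hyz.
  exists y; first by rewrite inE eqxx.
  move=> z; rewrite inE => /orP [/eqP ->|Hz]; first exact: le_refl'.
  by apply: le_trans' Hyz (Hmin z Hz).
exists zm; first by rewrite inE Hzm orbT.
by move=> z; rewrite inE => /orP [/eqP ->|Hz] //; apply: Hmin.
Qed.

Lemma fixed_span (Z : seq 'I_n) (l : seq poly) :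
  (forall p, p \in l -> keep_Z Z p = p) -> forall f, inspan l f -> keep_Z Z f = f.
Proof.
move=> Hl; apply: span_sub => //; split.
- exact: keep_Z0.
- by move=> x y Hx Hy; rewrite keep_ZD Hx Hy.
- by move=> a x Hx; rewrite keep_ZZ Hx.
Qed.

Lemma min_in_span (Z : seq 'I_n) (l : seq poly) zm f :
  (forall p, p \in l -> keep_Z Z p = p) -> inspan l f -> is_LT le f (var_term zm) ->
  (forall z, z \in Z -> le (var_term zm) (var_term z)) ->
  inspan l 'X_[var_term zm].
Proof.
move=> Hl Hf [Hin Hlt] Hmin.
have Hfix := fixed_span Hl Hf.
have Hc : f@_(var_term zm) != 0 by rewrite -mcoeff_msupp.
have -> : 'X_[var_term zm] = (f@_(var_term zm))^-1 *: f; last exact: inspanZ.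
apply/mpolyP => m; rewrite mcoeffX mcoeffZ; set c := f@_(var_term zm).
case: eqP => [<-|Hm]; first by rewrite mulVf.
rewrite -Hfix mcoeff_keep_Z; case: hasP => [[z Hz Hmz]|]; last by rewrite mulr0.
case: (eqVneq (f@_m) 0) => [->|Hfm]; first by rewrite mulr0.
exfalso; apply: Hm; apply: le_anti'.
  by apply: le_trans' (Hmin z Hz) (le_div Hmz).
by apply: Hlt; rewrite mcoeff_msupp.
Qed.

Lemma loopB delta : forall fuel (Z : seq 'I_n) (gc : seq poly) w d,
  uniq Z -> Z != [::] -> (size Z <= fuel)%N ->
  (forall p, p \in gc -> keep_Z Z p = p) ->
  (forall z, z \in Z -> exists f, inspan gc f /\ is_LT le f (var_term z)) ->
  exists W, check_loop delta fuel Z gc w d = Some W.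
Proof.
elim=> [|fuel IH] Z gc w d HU HZ Hsz Hgc Hf; first by move: Hsz; rewrite leqn0 size_eq0 (negbTE HZ).
rewrite /=.
set g1 := LI Z gc.
set Zt := [seq z <- Z | _].
have [zm Hzm Hmin] := min_exists HZ.
have HzmZt : zm \in Zt.
  rewrite mem_filter Hzm andbT.
  have [f [Hf1 Hf2]] := Hf zm Hzm.
  have [_ _ H3] := LI_spec Z gc; apply: H3.
  exact: min_in_span Hgc Hf1 Hf2 Hmin.
case: eqP => [HZt|_]; first by rewrite HZt in HzmZt.
set w' := [ffun k => _]; set Z' := [seq z <- Z | _]; set g2 := map _ g1.
case: eqP => [_|/eqP HZ']; first by exists w'.
apply: IH.
- exact: filter_uniq.
- exact: HZ'.
- rewrite -ltnS; apply: leq_trans Hsz.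
  rewrite size_filter -(count_predC (fun z => z \notin Zt)) -addn1 leq_add2l.
  by rewrite -has_count; apply/hasP; exists zm => //=; rewrite HzmZt.
- by move=> p /mapP [q Hq ->]; rewrite keep_Z_id.
move=> z Hz.
have HzZ : z \in Z by move: Hz; rewrite mem_filter => /andP [].
have HzZ' : z \notin Zt by move: Hz; rewrite mem_filter => /andP [].
have [f [Hf1 [Hin Hlt]]] := Hf z HzZ.
have [_ H2 _] := LI_spec Z gc.
have Hf1' : inspan g1 f := span_trans H2 Hf1.
exists (keep_Z Z' f); split.
  move: Hf1'; apply: (span_sub (S := fun h : poly => inspan g2 (keep_Z Z' h))).
    split.
    - by rewrite keep_Z0; apply: inspan0.
    - by move=> x y Hx Hy; rewrite keep_ZD; apply: inspanD.
    - by move=> a x Hx; rewrite keep_ZZ; apply: inspanZ.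
  by move=> x Hx; apply: inspan_mem; apply: map_f.
have Hh : has (fun z0 => (0 < var_term z z0)%N) Z'.
  by apply/hasP; exists z => //; rewrite /var_term mnm1E eqxx.
split.
  by rewrite mcoeff_msupp mcoeff_keep_Z Hh -mcoeff_msupp.
move=> t; rewrite mcoeff_msupp mcoeff_keep_Z; case: ifP => _; last by rewrite eqxx.
by rewrite -mcoeff_msupp; apply: Hlt.
Qed.

Lemma var_term_inj : injective (@var_term n).
Proof. by move=> a b /eqP; rewrite /var_term eq_mnm1 => /eqP. Qed.

Lemma dim_bound (l : seq poly) (Zs : seq 'I_n) : uniq Zs ->
  (forall p, p \in l -> keep_Z Zs p = p) ->
  (forall z, z \in Zs -> exists f, inspan l f /\ is_LT le f (var_term z)) ->
  (size Zs <= dim_Lin l)%N.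
Proof.
move=> HU Hl Hf.
set M := \matrix_(j < size l, k < n) (l`_j)@_(var_term k).
pose L (h : poly) : 'rV[K]_n := \row_(k < n) h@_(var_term k).
have HL : forall h, inspan l h -> (L h <= M)%MS.
  apply: (span_sub (S := fun h => (L h <= M)%MS)).
    split.
    - have -> : L 0 = 0 by apply/rowP => k; rewrite !mxE mcoeff0.
      exact: sub0mx.
    - move=> x y Hx Hy.
      have -> : L (x + y) = L x + L y by apply/rowP => k; rewrite !mxE mcoeffD.
      exact: addmx_sub.
    - move=> a x Hx.
      have -> : L (a *: x) = a *: L x by apply/rowP => k; rewrite !mxE mcoeffZ.
      exact: scalemx_sub.
  move=> x /(nthP 0) [j Hj <-].
  have -> : L l`_j = row (Ordinal Hj) M by apply/rowP => k; rewrite !mxE.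
  exact: row_sub.
have Hexp : forall h, L h = \sum_(k < n) h@_(var_term k) *: L 'X_[var_term k].
  move=> h; apply/rowP => j; rewrite summxE mxE (bigD1 j) //= big1.
    by rewrite !mxE mcoeffX eqxx mulr1 addr0.
  by move=> k Hk; rewrite !mxE mcoeffX /var_term eq_mnm1 (negbTE Hk) mulr0.
have Hmain : forall N (Y : seq 'I_n), (size Y <= N)%N -> {subset Y <= Zs} ->
    (forall z, z \in Zs -> z \notin Y -> (L 'X_[var_term z] <= M)%MS) ->
    forall z, z \in Y -> (L 'X_[var_term z] <= M)%MS.
  elim=> [|N IH] Y HsY HYZ HnY.
    by move: HsY; rewrite leqn0 size_eq0 => /eqP ->.
  case: (eqVneq Y [::]) => [->//|HY].
  have [zm Hzm Hmin] := min_exists HY.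
  have Hzm' : (L 'X_[var_term zm] <= M)%MS.
    have [f [Hf1 [Hin Hlt]]] := Hf zm (HYZ _ Hzm).
    have Hfix := fixed_span Hl Hf1.
    have HLf := HL f Hf1.
    have Hc : f@_(var_term zm) != 0 by rewrite -mcoeff_msupp.
    move: HLf; rewrite Hexp (bigD1 zm) //= => HLf.
    have Hrest : ((\sum_(k < n | k != zm) f@_(var_term k) *: L 'X_[var_term k])%R <= M)%MS.
      apply: summx_sub => k Hk.
      case: (eqVneq (f@_(var_term k)) 0) => [->|Hfk]; first by rewrite scale0r sub0mx.
      apply: scalemx_sub.
      have HkZ : k \in Zs.
        move: Hfk; rewrite -Hfix mcoeff_keep_Z; case: hasP => [[z' Hz' Hkz']|]; last by rewrite eqxx.
        by move: Hkz'; rewrite /var_term mnm1E; case: eqP => [->|].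
      apply: HnY => //; apply/negP => HkY.
      move: Hk; rewrite -(inj_eq var_term_inj) => /eqP; apply.
      apply: le_anti'; last exact: Hmin.
      by apply: Hlt; rewrite mcoeff_msupp.
    have -> : L 'X_[var_term zm] = (f@_(var_term zm))^-1 *:
        ((f@_(var_term zm) *: L 'X_[var_term zm] +
          \sum_(k < n | k != zm) f@_(var_term k) *: L 'X_[var_term k]) -
         \sum_(k < n | k != zm) f@_(var_term k) *: L 'X_[var_term k]).
      by rewrite addrK scalerA mulVf // scale1r.
    apply: scalemx_sub; apply: addmx_sub => //.
    by rewrite -scaleN1r; apply: scalemx_sub.
  move=> z Hz; case: (eqVneq z zm) => [->//|Hzzm].
  apply: (IH [seq y <- Y | y != zm]).
  - rewrite -ltnS; apply: leq_trans HsY.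
    rewrite size_filter -(count_predC (fun y => y != zm)) -addn1 leq_add2l.
    by rewrite -has_count; apply/hasP; exists zm => //=; rewrite eqxx.
  - by move=> y; rewrite mem_filter => /andP [_ /HYZ].
  - move=> y Hy; rewrite mem_filter negb_and negbK => /orP [/eqP ->//|]; exact: HnY.
  - by rewrite mem_filter Hzzm.
have HZs : forall z, z \in Zs -> (L 'X_[var_term z] <= M)%MS.
  by apply: (Hmain (size Zs) Zs) => // z ->.
pose T := in_tuple Zs.
set E := \matrix_(i < size Zs, k < n) ((tnth T i == k)%:R : K).
have HE : (E <= M)%MS.
  apply/row_subP => i.
  have -> : row i E = L 'X_[var_term (tnth T i)].
    by apply/rowP => k; rewrite !mxE mcoeffX /var_term eq_mnm1.
  by apply: HZs; apply: mem_tnth.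
have HEE : E *m E^T = 1%:M.
  apply/matrixP => i j; rewrite !mxE.
  rewrite (bigD1 (tnth T i)) //= big1.
    rewrite !mxE eqxx mul1r addr0.
    have Hinj : injective (tnth T) by apply/tuple_uniqP.
    by rewrite (inj_eq Hinj) eq_sym.
  by move=> k Hk; rewrite !mxE eq_sym (negbTE Hk) mul0r.
change (size Zs <= \rank M)%N.
have H1 : \rank (1%:M : 'M[K]_(size Zs)) = size Zs by apply: mxrank1.
rewrite -H1 -HEE.
exact: leq_trans (mxrankM_maxl E E^T) (mxrankS HE).
Qed.
End PartB.

Section Final.
Variable K : fieldType.
Variable n : nat.
Local Notation poly := {mpoly K[n]}.

Lemma keep_span (Z : seq 'I_n) (l : seq poly) f :
  inspan l f -> inspan (map (keep_Z Z) l) (keep_Z Z f).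
Proof.
apply: (span_sub (S := fun h : poly => inspan (map (keep_Z Z) l) (keep_Z Z h))).
  split.
  - by rewrite keep_Z0; apply: inspan0.
  - by move=> x y Hx Hy; rewrite keep_ZD; apply: inspanD.
  - by move=> a x Hx; rewrite keep_ZZ; apply: inspanZ.
by move=> x Hx; apply: inspan_mem; apply: map_f.
Qed.

Lemma keep_LT (le : rel 'X_{1..n}) (Z : seq 'I_n) z (f : poly) :
  z \in Z -> is_LT le f (var_term z) -> is_LT le (keep_Z Z f) (var_term z).
Proof.
move=> Hz [Hin Hlt].
have Hh : has (fun z0 => (0 < var_term z z0)%N) Z.
  by apply/hasP; exists z => //; rewrite /var_term mnm1E eqxx.
split.
  by rewrite mcoeff_msupp mcoeff_keep_Z Hh -mcoeff_msupp.
move=> t; rewrite mcoeff_msupp mcoeff_keep_Z; case: ifP => _; last by rewrite eqxx.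
by rewrite -mcoeff_msupp; apply: Hlt.
Qed.

Lemma Kspan_iff r (g : 'I_r -> poly) f :
  in_Kspan g f <-> inspan [seq g j | j <- enum 'I_r] f.
Proof.
split.
  move=> [c ->]; apply: inspan_sum => j; apply: inspanZ; apply: inspan_mem.
  by apply: map_f; rewrite mem_enum.
apply: span_sub.
  split.
  - by exists (fun _ => 0); rewrite big1 // => j _; rewrite scale0r.
  - move=> x y [c1 ->] [c2 ->]; exists (fun j => c1 j + c2 j).
    by rewrite -big_split; apply: eq_bigr => j _; rewrite scalerDl.
  - move=> a x [c ->]; exists (fun j => a * c j).
    by rewrite scaler_sumr; apply: eq_bigr => j _; rewrite scalerA.
move=> x /mapP [j _ ->]; exists (fun k => (k == j)%:R).
rewrite (bigD1 j) //= eqxx scale1r big1 ?addr0 // => k /negbTE ->.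
by rewrite scale0r.
Qed.

Lemma Kspan_ideal r (g : 'I_r -> poly) f : in_Kspan g f -> in_ideal g f.
Proof.
move=> [c ->]; exists (fun j => (c j)%:MP).
by apply: eq_bigr => j _; rewrite mul_mpolyC.
Qed.
End Final.

Unset Implicit Arguments.
Set Strict Implicit.
Set Printing Implicit Defensive.

Theorem proposition3p3 (K : fieldType) (n r s : nat)
    (g : 'I_r -> {mpoly K[n]}) (Z : 'I_s -> 'I_n) :
  injective Z -> (0 < s)%N ->
  (exists W : {ffun 'I_n -> nat},
      CHECK [seq g j | j <- enum 'I_r] [seq Z i | i <- enum 'I_s] = Some W)
  <->
  (exists f : 'I_s -> {mpoly K[n]},
      (forall i, in_ideal g (f i) /\ in_Kspan g (f i)) /\ Z_separating Z f).
Proof.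
move=> Zinj s0.
set G := [seq g j | j <- enum 'I_r].
set Zs := [seq Z i | i <- enum 'I_s].
have HU : uniq Zs by rewrite map_inj_uniq ?enum_uniq.
have HZs : Zs != [::] by rewrite -size_eq0 size_map size_enum_ord -lt0n.
have Hmem : forall i, Z i \in Zs by move=> i; apply: map_f; rewrite mem_enum.
split.
  move=> [W]; rewrite /CHECK; case: ifP => // _ HW.
  have Hd := @span_deg K n G.
  have Hgc : forall h, inspan (map (keep_Z Zs) G) h -> exists f, inspan G f /\ h = keep_Z Zs f.
    apply: span_sub.
      split.
      - by exists 0; split; [apply: inspan0 | rewrite keep_Z0].
      - move=> x y [f1 [Hf1 ->]] [f2 [Hf2 ->]]; exists (f1 + f2); split.
          exact: inspanD.
        by rewrite keep_ZD.
      - move=> a x [f1 [Hf1 ->]]; exists (a *: f1); split; first exact: inspanZ.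
        by rewrite keep_ZZ.
    by move=> x /mapP [y Hy ->]; exists y; split => //; apply: inspan_mem.
  have [_ HW2] := loopA Hd HW Hgc (ltn0Sn 0) (fun k => ltac:(by rewrite ffunE muln0)).
  have [f Hf] := fin_all_exists (fun i => HW2 (Z i) (Hmem i)).
  exists f; split.
    move=> i; have [Hfi _] := Hf i.
    have Hk : in_Kspan g (f i) by apply/Kspan_iff.
    by split => //; apply: Kspan_ideal.
  exists (leW W); split; first exact: leW_ord.
  move=> i; have [_ [Hc Hlt]] := Hf i; split; first by rewrite mcoeff_msupp.
  move=> t; rewrite mcoeff_msupp => Ht.
  case: (eqVneq t (var_term (Z i))) => [->|Hne]; first by rewrite /leW eqxx Order.POrderTheory.lexx orbT.
  by rewrite /leW (Hlt t Ht Hne).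
move=> [f [Hfi [le [Hle Hsep]]]].
have Hex : forall z, z \in Zs -> exists h, inspan (map (keep_Z Zs) G) h /\ is_LT le h (var_term z).
  move=> z /mapP [i _ ->]; exists (keep_Z Zs (f i)); split.
    by apply: keep_span; apply/Kspan_iff; case: (Hfi i).
  by apply: keep_LT; [apply: Hmem | apply: Hsep].
have Hfix : forall p, p \in map (keep_Z Zs) G -> keep_Z Zs p = p.
  by move=> p /mapP [q _ ->]; rewrite keep_Z_id.
rewrite /CHECK; case: ifP => [Hlt|_].
  by move: Hlt; rewrite ltnNge (dim_bound Hle HU Hfix Hex).
exact: (loopB Hle _ _ _ HU HZs (leqnn _) Hfix Hex).
Qed.
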